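(* Let $G$ be a forcibly terminating mean-payoff game with limited-observation. Then either Eve or Adam has a winning observation-based strategy with finite memory in $G$.
   Context: An MPG with limited-observation is a tuple $G=\langle Q,q_I,\Sigma,\Delta,w,Obs\rangle$: $Q$ finite, $q_I\in Q$, $\Sigma$ finite, $\Delta\subseteq Q\times\Sigma\times Q$ total, $w:\Delta\to\mathbb{Z}$, $Obs$ a partition of $Q$ with $\{q_I\}\in Obs$ and $\mathrm{post}_\sigma(o)=\{q':\exists q\in o,(q,\sigma,q')\in\Delta\}$ a union of elements of $Obs$ for all $o\in Obs,\sigma\in\Sigma$. Plays are infinite abstract paths $o_0\sigma_0o_1\ldots$ starting at $\{q_I\}$ (consecutive observations linked by some $\sigma_i$-transition); $\gamma(\psi)$ is the set of concrete paths $q_0\sigma_0q_1\ldots$ with $q_i\in o_i$, $(q_i,\sigma_i,q_{i+1})\in\Delta$; $\underline{MP}(\pi)=\liminf_n\frac1n\sum_{i<n}w(q_i,\sigma_i,q_{i+1})$; a play is winning for Eve if $\underline{MP}(\pi)\ge0$ for all $\pi\in\gamma(\psi)$, else for Adam. Observation-based strategies: Eve $\lambda_\exists:\mathrm{Prefs}(G)\to\Sigma$ (prefixes of plays ending in an observation); Adam $\lambda_\forall:\mathrm{Prefs}(G)\times\Sigma\to Obs$ with $\lambda_\forall(o_0\ldots o_n,\sigma)\cap\mathrm{post}_\sigma(o_n)\ne\emptyset$; winning if all consistent plays are winning for that player. Finite memory: realized by a finite set $M$, initial $m_0$, update $\alpha_u$ and output $\alpha_o$ functions reading the current observation (and, for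 Adam, the action) as in the usual Mealy-machine sense. Reachability game $\Gamma_G$: $\mathcal{F}$ is the set of $f:Q\to\mathbb{Z}\cup\{+\infty,\bot\}$, $\mathrm{supp}(f)=\{q:f(q)\ne\bot\}$; $f'$ is a $\sigma$-successor of $f$ if $\mathrm{supp}(f')\in Obs$, $\mathrm{supp}(f')\subseteq\mathrm{post}_\sigma(\mathrm{supp}(f))$ and each $f'(q)$, $q\in\mathrm{supp}(f')$, is $\min\{f(q')+w(q',\sigma,q):q'\in\mathrm{supp}(f),(q',\sigma,q)\in\Delta\}$ or $+\infty$. $f\preceq_k f'$ iff $\mathrm{supp}(f)=\mathrm{supp}(f')$ and $f(q)+k\le f'(q)$ on the support ($+\infty+k=+\infty$). $f_I(q_I)=0$, else $\bot$. $\Pi_G$: sequences $f_0\sigma_0\ldots f_n$ with $f_0=f_I$, $f_{i+1}$ a $\sigma_i$-successor of $f_i$, and $f_i\not\preceq_0f_j$, $f_j\not\preceq_1 f_i$ for $0\le i<j<n$. $\mathcal{T}_\exists$: such sequences with $f_i\preceq_0 f_n$ for some $i<n$; $\mathcal{T}_\forall$: such sequences with $f_n\preceq_1 f_i$ and $f_i(q)\ne+\infty$ for some $q\in\mathrm{supp}(f_i)$, for some $i<n$. In $\Gamma_G$, starting at $f_I$, Eve picks $\sigma$, Adam picks $f$ with $x\sigma f\in\Pi_G$; Eve wins upon reaching $\mathcal{T}_\exists$, Adam upon reaching $\mathcal{T}_\forall$. $G$ is forcibly terminating if in $\Gamma_G$ either Eve has a strategy ensuring $\mathcal{T}_\exists$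 is reached or Adam has a strategy ensuring $\mathcal{T}_\forall$ is reached. *)

(* Defs.v *)
From HB Require Import structures.
From mathcomp Require Import all_boot all_order all_algebra.
Import Order.TTheory GRing.Theory Num.Theory.
Local Open Scope ring_scope.

Record mpg := MPG {
  St : finType;
  Act : finType;
  qI : St;
  Delta : St -> Act -> St -> bool;
  wt : St -> Act -> St -> int;           (* weights (relevant on Delta) *)
  Obs : {set {set St}}
}.

Definition post (G : mpg) (s : Act G) (o : {set St G}) : {set St G} :=
  [set q' | [exists q in o, Delta G q s q']].

Definition wf_mpg (G : mpg) : Prop :=
  partition (Obs G) [set: St G] /\
  [set qI G] \in Obs G /\
  (forall (q : St G) (s : Act G), exists q' : St G, Delta G q s q') /\
  (forall (o : {set St G}) (s : Act G), o \in Obs G ->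
     exists S : {set {set St G}}, S \subset Obs G /\ post G s o = cover S).

Definition valid_play (G : mpg) (o : nat -> {set St G}) (a : nat -> Act G) : Prop :=
  o 0%N = [set qI G] /\
  (forall i, o i \in Obs G) /\
  (forall i, [exists q in o i, exists q' in o i.+1, Delta G q (a i) q']).

Definition valid_prefix (G : mpg) (o : nat -> {set St G}) (a : nat -> Act G)
    (n : nat) : Prop :=
  o 0%N = [set qI G] /\
  (forall i, (i <= n)%N -> o i \in Obs G) /\
  (forall i, (i < n)%N -> [exists q in o i, exists q' in o i.+1, Delta G q (a i) q']).

Definition concretization (G : mpg) (o : nat -> {set St G}) (a : nat -> Act G)
    (q : nat -> St G) : Prop :=
  forall i, q i \in o i /\ Delta G (q i) (a i) (q i.+1).

(* liminf_n (1/n) sum_{i<n} u_i >= 0, with liminf written out: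
   for every eps > 0, eventually (1/n) sum_{i<n} u_i >= -eps. *)
Definition mp_nonneg (u : nat -> int) : Prop :=
  forall eps : rat, 0 < eps ->
    exists N : nat, forall n : nat, (N <= n)%N ->
      - (eps * n%:R) <= (\sum_(i < n) u i)%:~R.

Definition eve_wins_play (G : mpg) (o : nat -> {set St G}) (a : nat -> Act G) : Prop :=
  forall q : nat -> St G, concretization G o a q ->
    mp_nonneg (fun i => wt G (q i) (a i) (q i.+1)).

Fixpoint memE (G : mpg) (M : Type) (m0 : M) (up : M -> {set St G} -> M)
    (o : nat -> {set St G}) (n : nat) : M :=
  match n with
  | 0 => m0
  | k.+1 => up (memE G M m0 up o k) (o k)
  end.

Definition eve_fm_winning (G : mpg) : Prop :=
  exists (M : finType) (m0 : M) (up : M -> {set St G} -> M)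
         (out : M -> {set St G} -> Act G),
    forall (o : nat -> {set St G}) (a : nat -> Act G),
      valid_play G o a ->
      (forall n, a n = out (memE G M m0 up o n) (o n)) ->
      eve_wins_play G o a.

Fixpoint memA (G : mpg) (M : Type) (m0 : M) (up : M -> {set St G} -> Act G -> M)
    (o : nat -> {set St G}) (a : nat -> Act G) (n : nat) : M :=
  match n with
  | 0 => m0
  | k.+1 => up (memA G M m0 up o a k) (o k) (a k)
  end.

Definition adam_fm_winning (G : mpg) : Prop :=
  exists (M : finType) (m0 : M) (up : M -> {set St G} -> Act G -> M)
         (out : M -> {set St G} -> Act G -> {set St G}),
    (forall (o : nat -> {set St G}) (a : nat -> Act G) (n : nat),
       valid_prefix G o a n ->
       (forall i, (i < n)%N -> o i.+1 = out (memA G M m0 up o a i) (o i) (a i)) ->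
       forall s : Act G,
         out (memA G M m0 up o a n) (o n) s \in Obs G /\
         out (memA G M m0 up o a n) (o n) s :&: post G s (o n) != set0) /\
    (forall (o : nat -> {set St G}) (a : nat -> Act G),
       valid_play G o a ->
       (forall n, o n.+1 = out (memA G M m0 up o a n) (o n) (a n)) ->
       ~ eve_wins_play G o a).

Inductive ext := EFin of int | EInf | EBot.

Definition is_bot (e : ext) : bool := if e is EBot then true else false.

Definition supp (G : mpg) (f : St G -> ext) : {set St G} :=
  [set q | ~~ is_bot (f q)].

Definition addw (e : ext) (k : int) : ext :=
  match e with EFin z => EFin (z + k) | e' => e' end.

Definition le_ext (e1 e2 : ext) : Prop :=
  match e1, e2 with
  | EFin a, EFin b => a <= b
  | EFin _, EInf => True
  | EInf, EInf => True
  | _, _ => False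
  end.

Definition is_min (P : ext -> Prop) (e : ext) : Prop :=
  P e /\ forall e', P e' -> le_ext e e'.

Definition cands (G : mpg) (f : St G -> ext) (s : Act G) (q : St G) (e : ext) : Prop :=
  exists q', q' \in supp G f /\ Delta G q' s q /\ e = addw (f q') (wt G q' s q).

Definition successor (G : mpg) (f : St G -> ext) (s : Act G) (f' : St G -> ext) : Prop :=
  supp G f' \in Obs G /\
  supp G f' \subset post G s (supp G f) /\
  (forall q, q \in supp G f' -> is_min (cands G f s q) (f' q) \/ f' q = EInf).

Definition preceq (G : mpg) (k : int) (f f' : St G -> ext) : Prop :=
  supp G f = supp G f' /\
  (forall q, q \in supp G f -> le_ext (addw (f q) k) (f' q)).

Definition fI (G : mpg) (q : St G) : ext := if q == qI G then EFin 0 else EBot.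

(* A sequence f_0 s_0 f_1 ... s_{n-1} f_n, stored as (f_0, [(s_0,f_1);...]). *)
Definition gpos (G : mpg) : Type := ((St G -> ext) * seq (Act G * (St G -> ext)))%type.

Definition glen (G : mpg) (x : gpos G) : nat := size x.2.

Definition gf (G : mpg) (x : gpos G) (i : nat) : St G -> ext :=
  nth x.1 (x.1 :: map snd x.2) i.

Fixpoint succ_chain (G : mpg) (f : St G -> ext) (s : seq (Act G * (St G -> ext))) : Prop :=
  match s with
  | [::] => True
  | (a, f') :: s' => successor G f a f' /\ succ_chain G f' s'
  end.

Definition gextend (G : mpg) (x : gpos G) (s : Act G) (f : St G -> ext) : gpos G :=
  (x.1, rcons x.2 (s, f)).

Definition ginit (G : mpg) : gpos G := (fI G, [::]).

Definition InPi (G : mpg) (x : gpos G) : Prop :=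
  (forall q, x.1 q = fI G q) /\
  succ_chain G x.1 x.2 /\
  (forall i j, (i < j)%N -> (j < glen G x)%N ->
     ~ preceq G 0 (gf G x i) (gf G x j) /\ ~ preceq G 1 (gf G x j) (gf G x i)).

Definition TE (G : mpg) (x : gpos G) : Prop :=
  InPi G x /\ exists i, (i < glen G x)%N /\ preceq G 0 (gf G x i) (gf G x (glen G x)).

Definition TA (G : mpg) (x : gpos G) : Prop :=
  InPi G x /\ exists i, (i < glen G x)%N /\
    preceq G 1 (gf G x (glen G x)) (gf G x i) /\
    exists q, q \in supp G (gf G x i) /\ gf G x i q <> EInf.

Definition nonterminal (G : mpg) (x : gpos G) : Prop := ~ TE G x /\ ~ TA G x.

Definition eve_forces (G : mpg) (tau : gpos G -> Act G) : Prop :=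
  forall xs : nat -> gpos G,
    xs 0%N = ginit G ->
    (forall k, nonterminal G (xs k) ->
       exists f, xs k.+1 = gextend G (xs k) (tau (xs k)) f /\ InPi G (xs k.+1)) ->
    exists k, TE G (xs k) /\ forall j, (j < k)%N -> nonterminal G (xs j).

Definition adam_forces (G : mpg) (rho : gpos G -> Act G -> (St G -> ext)) : Prop :=
  (forall x s, InPi G x -> nonterminal G x -> InPi G (gextend G x s (rho x s))) /\
  forall xs : nat -> gpos G,
    xs 0%N = ginit G ->
    (forall k, nonterminal G (xs k) ->
       exists s, xs k.+1 = gextend G (xs k) s (rho (xs k) s)) ->
    exists k, TA G (xs k) /\ forall j, (j < k)%N -> nonterminal G (xs j).

Definition forcibly_terminating (G : mpg) : Prop :=
  (exists tau, eve_forces G tau) \/ (exists rho, adam_forces G rho).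

(* Main.v *)
Require Import Defs.
From mathcomp Require Import all_boot all_order all_algebra zify.
From Stdlib Require Import Classical ClassicalEpsilon.
Import Order.TTheory GRing.Theory Num.Theory.

Section RatAux.
Local Open Scope ring_scope.
Lemma rat_eventually (C : nat) (eps : rat) : 0 < eps ->
  exists N : nat, forall n : nat, (N <= n)%N -> C%:R <= eps * n%:R.
Proof.
move=> He.
have H0 : 0 <= C%:R / eps by rewrite divr_ge0 // ltW.
exists (Num.bound (C%:R / eps)) => n Hn.
have H1 := archi_boundP H0.
rewrite mulrC -ler_pdivrMr //.
apply: le_trans (ltW H1) _; by rewrite ler_nat.
Qed.
Lemma negabs (z : int) (C : nat) : (absz z <= C)%N -> (- (C%:Z) <= z)%R.
Proof. lia. Qed.
Lemma posabs (z : int) (C : nat) : (absz z <= C)%N -> (z <= C%:Z)%R.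
Proof. lia. Qed.
Lemma val_insub_bseq n (T : Type) (s : seq T) : (size s <= n)%N -> val (insub_bseq n s) = s.
Proof. by move=> H; rewrite /insub_bseq insubdK. Qed.
Lemma sum_le_big (I : finType) (F : I -> nat) i : (F i <= \sum_(j : I) F j)%N.
Proof. by rewrite (bigD1 i) //= leq_addr. Qed.
Lemma rat_to_int (D n : nat) (X : int) (eps : rat) : (0 < D)%N -> eps = ((2*D)%:R)^-1 ->
  -(eps * n%:R) <= X%:~R -> - (n%:Z) <= (2*D)%:Z * X.
Proof.
move=> HD -> H.
have H0 : (0 : rat) < (2*D)%:R by rewrite ltr0n muln_gt0.
have := ler_wpM2l (ltW H0) H.
rewrite mulrN mulrA mulfV ?mul1r; last by rewrite gt_eqF.
rewrite -(ler_int rat) intrN intrM /=.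
by [].
Qed.
Lemma final_contra (D n sz R C : nat) (X : int) : (0 < D)%N -> (sz < D)%N -> (n <= sz + D * R)%N ->
  (X + R%:Z <= C%:Z)%R -> (- (n%:Z) <= (2*D)%:Z * X)%R -> (n <= 2 * D * (C + 1))%N.
Proof. nia. Qed.

End RatAux.

Set Implicit Arguments. Unset Strict Implicit.

Definition pickn (P : nat -> Prop) (d : nat) : nat :=
  match excluded_middle_informative (exists n, P n) with
  | left H => proj1_sig (constructive_indefinite_description _ H)
  | right _ => d end.

Lemma picknP P d : (exists n, P n) -> P (pickn P d).
Proof.
rewrite /pickn; case: excluded_middle_informative => // H _.
exact: (proj2_sig (constructive_indefinite_description _ H)).
Qed.

Lemma pickn_none P d : ~ (exists n, P n) -> pickn P d = d.
Proof. by rewrite /pickn; case: excluded_middle_informative. Qed.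

Section Konig.
Variables (T : finType) (P : seq T -> Prop).
Hypothesis Pclosed : forall p t, P (rcons p t) -> P p.

Lemma Pcat p q : P (p ++ q) -> P p.
Proof.
elim/last_ind: q => [|q t IH]; first by rewrite cats0.
by rewrite -rcons_cat => /Pclosed.
Qed.

Definition ext_ok p := forall N, exists q, P (p ++ q) /\ (N <= size q)%N.

Lemma ext_ok_step p : ext_ok p -> exists t, ext_ok (rcons p t).
Proof.
move=> Hp; apply: NNPP => Hn.
have H : forall t, exists N, forall q, P (rcons p t ++ q) -> (size q < N)%N.
  move=> t; apply: NNPP => Hc; apply: Hn; exists t => N.
  apply: NNPP => Hq; apply: Hc; exists N => q Pq.
  rewrite ltnNge; apply/negP => HN; apply: Hq; by exists q.
pose Nt t := proj1_sig (constructive_indefinite_description _ (H t)).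
have HNt t := proj2_sig (constructive_indefinite_description _ (H t)).
have [q [Pq Hs]] := Hp (\max_(t : T) Nt t).+1.
case: q Pq Hs => [|t q] //= Pq Hs.
have := HNt t q; rewrite cat_rcons => /(_ Pq).
rewrite ltnNge => /negP; apply.
have Hm := @leq_bigmax T (fun t => Nt t) t.
apply: leq_trans Hm _; by [].
Qed.

Lemma konig : (forall N, exists p, P p /\ (N <= size p)%N) ->
  exists c : nat -> T, forall n, P (mkseq c n).
Proof.
move=> Hall.
have [p0 [_ Hp0]] := Hall 1%N.
case: p0 Hp0 => [|t0 p0] // _.
pose nxt p := match excluded_middle_informative (exists t, ext_ok (rcons p t)) with
  | left H => proj1_sig (constructive_indefinite_description _ H)
  | right _ => t0 end.
have nxtP p : ext_ok p -> ext_ok (rcons p (nxt p)).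
  move=> Hp; rewrite /nxt; case: excluded_middle_informative => [H|H].
    exact: (proj2_sig (constructive_indefinite_description _ H)).
  by case: H; apply: ext_ok_step.
pose fix pref n := if n is n'.+1 then rcons (pref n') (nxt (pref n')) else [::].
exists (fun n => nxt (pref n)).
have E n : mkseq (fun n => nxt (pref n)) n = pref n.
  by elim: n => [|n IH] //; rewrite mkseqS IH.
have OK n : ext_ok (pref n).
  elim: n => [|n IH] /=; last exact: nxtP.
  move=> N; have [p [Pp Hs]] := Hall N; by exists p.
move=> n; rewrite E; have [q [Pq _]] := OK n 0%N; exact: Pcat Pq.
Qed.

Lemma konig_bound : ~ (exists c : nat -> T, forall n, P (mkseq c n)) ->
  exists N, forall p, P p -> (size p < N)%N.
Proof.
move=> Hn; apply: NNPP => Hb; apply: Hn; apply: konig => N.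
apply: NNPP => Hc; apply: Hb; exists N => p Pp.
rewrite ltnNge; apply/negP => HN; apply: Hc; by exists p.
Qed.
End Konig.


Definition emin (e1 e2 : ext) : ext :=
  match e1, e2 with
  | EBot, _ => e2
  | _, EBot => e1
  | EFin a, EFin b => EFin (Order.min a b)
  | EFin a, EInf => EFin a
  | EInf, _ => e2
  end.

Lemma emin_cases a b : emin a b = a \/ emin a b = b.
Proof.
case: a; case: b => //=; try by [left|right].
move=> x y; rewrite /Order.min; case: ifP => _; [left|right] => //.
Qed.

Lemma le_ext_refl e : ~~ is_bot e -> le_ext e e.
Proof. by case: e => //= z _; rewrite lexx. Qed.

Lemma le_ext_trans a b c : le_ext a b -> le_ext b c -> le_ext a c.
Proof.
case: a; case: b; case: c => //= x y z; exact: le_trans.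
Qed.

Lemma le_ext_nb a b : le_ext a b -> ~~ is_bot a /\ ~~ is_bot b.
Proof. by case: a; case: b. Qed.

Lemma emin_le_l a b : ~~ is_bot a -> le_ext (emin a b) a.
Proof.
case: a; case: b => //= *; by rewrite ?lexx // ge_min lexx ?orbT.
Qed.

Lemma emin_le_r a b : ~~ is_bot b -> le_ext (emin a b) b.
Proof.
case: a; case: b => //= *; by rewrite ?lexx // ge_min lexx ?orbT.
Qed.

Lemma addw_nb e k : ~~ is_bot e -> ~~ is_bot (addw e k).
Proof. by case: e. Qed.

Lemma addwFin e k z : addw e k = EFin z -> e = EFin (z - k)%R.
Proof. case: e => //= y [<-]; by rewrite addrK. Qed.

Section Gen.
Variable G : mpg.

Definition lastf (x : gpos G) := gf G x (glen G x).

Definition ccond (f : St G -> ext) (s : Act G) (q q' : St G) : bool :=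
  (q' \in supp G f) && Delta G q' s q.

Definition cval (f : St G -> ext) (s : Act G) (q q' : St G) : ext :=
  addw (f q') (wt G q' s q).

Definition candl f s q (l : seq (St G)) : ext :=
  foldr (fun q' acc => if ccond f s q q' then emin (cval f s q q') acc else acc) EBot l.

Lemma cval_nb f s q q' : ccond f s q q' -> ~~ is_bot (cval f s q q').
Proof. case/andP => H _; apply: addw_nb; by move: H; rewrite /supp inE. Qed.

Lemma candl_le f s q l q' : q' \in l -> ccond f s q q' -> le_ext (candl f s q l) (cval f s q q').
Proof.
elim: l => [|x l IH] //=; rewrite inE => /orP [/eqP ->|Hl] Hc.
  by rewrite Hc; apply: emin_le_l; apply: cval_nb.
have H := IH Hl Hc.
case: ifP => Hx //.

exact: (le_ext_trans (emin_le_r _ (le_ext_nb H).1) H).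
Qed.

Lemma candl_val f s q l : candl f s q l = EBot \/
  exists q', q' \in l /\ ccond f s q q' /\ candl f s q l = cval f s q q'.
Proof.
elim: l => [|x l IH] /=; first by left.
case: ifP => Hx; last first.
  case: IH => [->|[q' [H1 [H2 H3]]]]; first by left.
  by right; exists q'; rewrite inE H1 orbT.
right; case: IH => [->|[q' [H1 [H2 H3]]]].
  exists x; rewrite inE eqxx; split => //; split => //.
  by move: (cval_nb Hx); case: (cval f s q x).
case: (emin_cases (cval f s q x) (candl f s q l)) => ->.
  by exists x; rewrite inE eqxx.
by exists q'; rewrite inE H1 orbT.
Qed.

Definition mincand f s q := candl f s q (enum (St G)).

Lemma mincand_min f s q q' : ccond f s q q' -> is_min (cands G f s q) (mincand f s q).
Proof.
move=> Hc; have Hle := candl_le (mem_enum _ q') Hc.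
split.
  case: (candl_val f s q (enum (St G))) => [E|[q'' [_ [Hc' E]]]].
    by move: Hle; rewrite /mincand E.
  exists q''; case/andP: Hc' => H1 H2; split => //; split => //.
move=> e [q'' [H1 [H2 ->]]].
apply: candl_le; first exact: mem_enum.
by rewrite /ccond H1.
Qed.

Definition fin_on (f : St G -> ext) := forall q, q \in supp G f -> exists z, f q = EFin z.

Lemma mincand_fin f s q q' : fin_on f -> ccond f s q q' -> exists z, mincand f s q = EFin z.
Proof.
move=> Hf Hc.
case: (candl_val f s q (enum (St G))) => [E|[q'' [_ [Hc' E]]]].
  by have := candl_le (mem_enum _ q') Hc; rewrite E.
rewrite /mincand E /cval; case/andP: Hc' => /Hf [z ->] _ /=; by eexists.
Qed.

Lemma glen_gext x s f : glen G (gextend G x s f) = (glen G x).+1.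
Proof. by rewrite /glen /gextend size_rcons. Qed.

Lemma gf_gext_old x s f i : (i <= glen G x)%N -> gf G (gextend G x s f) i = gf G x i.
Proof.
move=> Hi; rewrite /gf /gextend /=.
case: i Hi => [|i] Hi //=; by rewrite map_rcons nth_rcons size_map Hi.
Qed.

Lemma lastf_gext x s f : lastf (gextend G x s f) = f.
Proof.
rewrite /lastf glen_gext /gf /gextend /= map_rcons nth_rcons size_map.
by rewrite ltnn eqxx.
Qed.

Lemma lastf_last x : lastf x = last x.1 (map snd x.2).
Proof.
rewrite /lastf /gf /glen; have := nth_last x.1 (x.1 :: map snd x.2).
by rewrite /= size_map.
Qed.

Lemma succ_chain_rcons f l s f' :
  succ_chain G f (rcons l (s, f')) <-> succ_chain G f l /\ successor G (last f (map snd l)) s f'.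
Proof.
elim: l f => [|[a g] l IH] f /=; first by split => [[]|[]].
rewrite IH; tauto.
Qed.

Definition nonterm x := nonterminal G x.

Lemma InPi_gext x s f :
  InPi G x -> nonterm x ->
  (forall i, (i < glen G x)%N -> exists q, q \in supp G (gf G x i) /\ gf G x i q <> EInf) ->
  successor G (lastf x) s f -> InPi G (gextend G x s f).
Proof.
move=> HP [nTE nTA] Hfin Hs; have [H1 [H2 H3]] := HP.
split => //; split.
  by rewrite /gextend /= succ_chain_rcons -lastf_last.
move=> i j Hij; rewrite glen_gext ltnS leq_eqVlt => /orP [/eqP Ej|Hj].
  have Hi : (i < glen G x)%N by rewrite -Ej.
  rewrite !gf_gext_old ?Ej ?(ltnW Hi) //; split.
    by move=> Hp; apply: nTE; split => //; exists i.
  move=> Hp; apply: nTA; split => //; exists i; split => //; split => //.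
  exact: Hfin.
rewrite !gf_gext_old ?(ltnW Hj) ?(ltnW (ltn_trans Hij Hj)) //.
exact: H3.
Qed.

Lemma ginit_nonterm : nonterm (ginit G).
Proof. by split; case => _ [i []]. Qed.

Lemma ginit_InPi : InPi G (ginit G).
Proof. by split => //; split => // i j _; rewrite /glen /=. Qed.

Section Rep.
Variables (T : Type) (act : gpos G -> T -> Act G) (resp : gpos G -> T -> (St G -> ext)).
Definition stp x t := gextend G x (act x t) (resp x t).
Definition rep (cs : seq T) := foldl stp (ginit G) cs.

Lemma rep_rcons cs t : rep (rcons cs t) = stp (rep cs) t.
Proof. by rewrite /rep foldl_rcons. Qed.

Lemma glen_rep cs : glen G (rep cs) = size cs.
Proof.
elim/last_ind: cs => [|cs t IH] //; by rewrite rep_rcons /stp glen_gext IH size_rcons.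
Qed.

Lemma rep1 cs : (rep cs).1 = fI G.
Proof. elim/last_ind: cs => [|cs t IH] //; by rewrite rep_rcons. Qed.

Lemma gf_rep_take cs i : (i <= size cs)%N -> gf G (rep cs) i = lastf (rep (take i cs)).
Proof.
elim/last_ind: cs i => [|cs t IH] i.
  by rewrite leqn0 => /eqP ->.
rewrite size_rcons leq_eqVlt => /orP [/eqP ->|Hi].
  rewrite take_oversize ?size_rcons // rep_rcons /lastf /stp.
  by rewrite glen_gext glen_rep.
rewrite ltnS in Hi.
rewrite rep_rcons /stp gf_gext_old ?glen_rep // IH // -cats1 takel_cat //.
Qed.

Lemma take_rcons_le (cs : seq T) t i : (i <= size cs)%N -> take i (rcons cs t) = take i cs.
Proof. by move=> Hi; rewrite -cats1 takel_cat. Qed.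

End Rep.

Hypothesis Hwf : wf_mpg G.

Lemma obs_neq0 o : o \in Obs G -> o != set0.
Proof. by case: Hwf => Hp _; apply: partition_neq0 Hp. Qed.

Lemma obs_cover q : exists o, o \in Obs G /\ q \in o.
Proof.
case: Hwf => Hp _; case/and3P: Hp => /eqP Hc _ _.
have : q \in cover (Obs G) by rewrite Hc inE.
by case/bigcupP => o Ho Hq; exists o.
Qed.

Lemma obs_eq o o' q : o \in Obs G -> o' \in Obs G -> q \in o -> q \in o' -> o = o'.
Proof.
case: Hwf => Hp _ Ho Ho' Hq Hq'.
have Ht := partition_trivIset Hp.
by rewrite -(def_pblock Ht Ho Hq) -(def_pblock Ht Ho' Hq').
Qed.

Lemma obs_sub_post o o' s : o \in Obs G -> o' \in Obs G ->
  o :&: post G s o' != set0 -> o \subset post G s o'.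
Proof.
case: Hwf => _ [_ [_ Hpost]] Ho Ho' Hne.
have [S [HS Ep]] := Hpost o' s Ho'.
case/set0Pn: Hne => q; rewrite in_setI => /andP [Hq Hq2].
have : q \in cover S by rewrite -Ep.
move=> /bigcupP [B HB HqB].
have HBo : B \in Obs G by apply: (subsetP HS).
rewrite (obs_eq Ho HBo Hq HqB) Ep.
by apply/subsetP => z Hz; apply/bigcupP; exists B.
Qed.

Lemma in_post s o q : (q \in post G s o) = [exists q' in o, Delta G q' s q].
Proof. by rewrite /post inE. Qed.

End Gen.


Section Eve.
Variable G : mpg.
Hypothesis Hwf : wf_mpg G.
Variable tau : gpos G -> Act G.
Hypothesis Htau : eve_forces G tau.

Definition minf (f : St G -> ext) (s : Act G) (o : {set St G}) : St G -> ext :=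
  fun q => if q \in o then mincand f s q else EBot.

Definition actE (x : gpos G) (o : {set St G}) := tau x.
Definition respE (x : gpos G) (o : {set St G}) := minf (lastf x) (tau x) o.
Local Notation repE := (rep actE respE).
Local Notation stepE := (stp actE respE).

Definition validE (x : gpos G) (o : {set St G}) : bool :=
  (o \in Obs G) && (o :&: post G (tau x) (supp G (lastf x)) != set0).

Definition goodE (x : gpos G) := InPi G x /\
  forall i, (i <= glen G x)%N -> supp G (gf G x i) \in Obs G /\ fin_on (gf G x i).

Lemma supp_minf (f : St G -> ext) (s : Act G) (o : {set St G}) : o \subset post G s (supp G f) -> supp G (minf f s o) = o.
Proof.
move=> Ho; apply/setP => q; rewrite /supp inE /minf.
case: ifP => Hq //.
have := subsetP Ho q Hq; rewrite in_post => /existsP [q' /andP [H1 H2]].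
have Hc : ccond f s q q' by rewrite /ccond H1.
have [[q'' [Hs [_ ->]]] _] := mincand_min Hc.
by apply: addw_nb; move: Hs; rewrite /supp inE.
Qed.

Lemma goodE_step x o : goodE x -> nonterm x -> validE x o ->
  goodE (stepE x o) /\ supp G (lastf (stepE x o)) = o.
Proof.
move=> [HP Hg] Hnt /andP [Ho Hne].
have [Hsl Hfl] := Hg _ (leqnn _).
have Hsub := obs_sub_post Hwf Ho Hsl Hne.
have Hsupp := supp_minf Hsub.
have Hsucc : successor G (lastf x) (tau x) (minf (lastf x) (tau x) o).
  split; first by rewrite Hsupp.
  split; first by rewrite Hsupp.
  move=> q; rewrite Hsupp => Hq; left.
  have := subsetP Hsub q Hq; rewrite in_post => /existsP [q' /andP [H1 H2]].
  have Hc : ccond (lastf x) (tau x) q q' by rewrite /ccond H1.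
  by rewrite /minf Hq; apply: mincand_min Hc.
have Hlast : lastf (stepE x o) = minf (lastf x) (tau x) o by rewrite /stp lastf_gext.
split; last by rewrite Hlast.
split.
  apply: InPi_gext => //.
  move=> i Hi; have [Hs Hf] := Hg i (ltnW Hi).
  have /set0Pn [q Hq] := obs_neq0 Hwf Hs.
  have [z Hz] := Hf q Hq; by exists q; rewrite Hz.
move=> i; rewrite /stp glen_gext leq_eqVlt => /orP [/eqP ->|Hi].
  have -> : gf G (gextend G x (actE x o) (respE x o)) (glen G x).+1 = lastf (stepE x o).
    by rewrite /lastf /stp glen_gext.
  rewrite Hlast Hsupp; split => //.
  move=> q; rewrite Hsupp => Hq.
  have := subsetP Hsub q Hq; rewrite in_post => /existsP [q' /andP [H1 H2]].
  have Hc : ccond (lastf x) (tau x) q q' by rewrite /ccond H1.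
  by rewrite /minf Hq; apply: mincand_fin Hc.
by rewrite ltnS in Hi; rewrite gf_gext_old //; apply: Hg.
Qed.

Lemma goodE_init : goodE (ginit G).
Proof.
split; first exact: ginit_InPi.
move=> i; rewrite leqn0 => /eqP ->.
have Hs : supp G (gf G (ginit G) 0) = [set qI G].
  by apply/setP => q; rewrite /supp /gf /= /fI !inE; case: eqP.
rewrite Hs; split; first by case: Hwf => _ [].
move=> q; rewrite /supp /gf /= /fI inE; case: eqP => // _ _; by eexists.
Qed.

Definition preE (cs : seq {set St G}) := forall k, (k < size cs)%N ->
  nonterm (repE (take k cs)) /\ validE (repE (take k cs)) (nth set0 cs k).

Lemma preE_good cs : preE cs -> forall k, (k <= size cs)%N -> goodE (repE (take k cs)).
Proof.
move=> Hp; elim => [|k IH] Hk; first by rewrite take0; exact: goodE_init.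
have [Hnt Hv] := Hp k Hk.
rewrite (take_nth set0 Hk)  rep_rcons .
exact: (goodE_step (IH (ltnW Hk)) Hnt Hv).1.
Qed.

Lemma take_oversize' (T : Type) (cs : seq T) k : (size cs <= k)%N -> take k cs = cs.
Proof. exact: take_oversize. Qed.

Lemma TE_of_term cs : preE cs -> ~ nonterm (repE cs) -> TE G (repE cs).
Proof.
move=> Hp Hnt.
pose xs k := repE (take k cs).
have H0 : xs 0 = ginit G by rewrite /xs take0.
have Hstep : forall k, nonterm (xs k) -> exists f, xs k.+1 = gextend G (xs k) (tau (xs k)) f /\ InPi G (xs k.+1).
  move=> k Hk.
  case: (ltnP k (size cs)) => Hks; last by case: Hnt; rewrite -(take_oversize Hks).
  exists (respE (repE (take k cs)) (nth set0 cs k)).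
  rewrite /xs (take_nth set0 Hks)  rep_rcons; split => //.
  have := (preE_good Hp Hks); rewrite (take_nth set0 Hks)  rep_rcons; by case.
have [k [HTE Hj]] := Htau H0 Hstep.
case: (ltnP k (size cs)) => Hks.
  by case: (Hp k Hks) => [[nTE _] _].
by move: HTE; rewrite /xs take_oversize.
Qed.

Lemma preE_rcons cs o : preE cs -> nonterm (repE cs) -> validE (repE cs) o -> preE (rcons cs o).
Proof.
move=> Hp Hnt Hv k; rewrite size_rcons ltnS leq_eqVlt => /orP [/eqP ->|Hk].
  by rewrite take_rcons_le // take_size nth_rcons ltnn eqxx.
by rewrite take_rcons_le ?(ltnW Hk) // nth_rcons Hk; apply: Hp.
Qed.

Lemma preE_rcons_inv cs o : preE (rcons cs o) -> preE cs /\ nonterm (repE cs).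
Proof.
move=> Hp; split.
  move=> k Hk; have := Hp k; rewrite size_rcons ltnS (ltnW Hk) take_rcons_le ?(ltnW Hk) //.
  by rewrite nth_rcons Hk; apply.
have := Hp (size cs); rewrite size_rcons ltnS leqnn take_rcons_le // take_size.
by case.
Qed.

Lemma boundE : exists D, forall cs, preE cs -> nonterm (repE cs) -> (size cs < D)%N.
Proof.
suff Hno : ~ (exists c : nat -> {set St G}, forall n, preE (mkseq c n) /\ nonterm (repE (mkseq c n))).
  have [D HD] := @konig_bound _ (fun cs => preE cs /\ nonterm (repE cs))
    (fun p t H => preE_rcons_inv H.1) Hno.
  by exists D => cs H1 H2; apply: HD.
move=> [c Hc].
pose xs k := repE (mkseq c k).
have H0 : xs 0 = ginit G by [].
have Hstep : forall k, nonterm (xs k) -> exists f, xs k.+1 = gextend G (xs k) (tau (xs k)) f /\ InPi G (xs k.+1).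
  move=> k Hk; exists (respE (xs k) (c k)).
  rewrite /xs mkseqS  rep_rcons; split => //.
  have := preE_good (Hc k.+1).1 (leqnn _); rewrite take_size mkseqS  rep_rcons.
  by case.
have [k [HTE _]] := Htau H0 Hstep.
by case: (Hc k) => _ [].
Qed.

Definition normE (cs : seq {set St G}) : seq {set St G} :=
  take (pickn (fun i => (i < size cs)%N /\ preceq G 0%R (gf G (repE cs) i) (lastf (repE cs))) (size cs)) cs.

Lemma preceq_refl f : fin_on f -> preceq G 0%R f f.
Proof.
move=> Hf; split => // q /Hf [z ->] /=; by rewrite addr0 lexx.
Qed.

Lemma norm_step cs o : preE cs -> nonterm (repE cs) -> validE (repE cs) o ->
  preE (normE (rcons cs o)) /\ nonterm (repE (normE (rcons cs o))) /\
  supp G (lastf (repE (normE (rcons cs o)))) = o /\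
  preceq G 0%R (lastf (repE (normE (rcons cs o)))) (lastf (stepE (repE cs) o)).
Proof.
move=> Hp Hnt Hv.
have Hr := preE_rcons Hp Hnt Hv.
have Ey : repE (rcons cs o) = stepE (repE cs) o by rewrite  rep_rcons.
have gx : goodE (repE cs) by have := preE_good Hp (leqnn _); rewrite take_size.
have gy : goodE (repE (rcons cs o)) by have := preE_good Hr (leqnn _); rewrite take_size.
have Hsy : supp G (lastf (repE (rcons cs o))) = o by rewrite Ey; case: (goodE_step gx Hnt Hv).
have finy : fin_on (lastf (repE (rcons cs o))) by have := gy.2 _ (leqnn _); case.
rewrite -Ey /normE.
set P := fun i => _.
case: (classic (nonterm (repE (rcons cs o)))) => Hy.
  rewrite pickn_none ?take_size; last first.
    move=> [i [Hi Hpr]]; case: Hy => [nTE _]; apply: nTE; split; first exact: gy.1.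
    by exists i; split => //; rewrite glen_rep.
  split => //; split => //; split => //; exact: preceq_refl.
have [_ [i [Hi Hpr]]] := TE_of_term Hr Hy.
rewrite glen_rep in Hi.
have [Hi' Hpr'] : P (pickn P (size (rcons cs o))) by apply: picknP; exists i.
move: Hi' Hpr'; set j := pickn _ _ => Hj Hpr'.
rewrite -gf_rep_take ?(ltnW Hj) //.
split.
  move=> k; rewrite size_take Hj => Hk.
  by rewrite take_takel ?(ltnW Hk) // nth_take //; apply: Hr; apply: ltn_trans Hj.
split; first by case: (Hr j Hj).
split; last by [].
by rewrite Hpr'.1.
Qed.

End Eve.


Section EveWin.
Variable G : mpg.
Hypothesis Hwf : wf_mpg G.
Variable tau : gpos G -> Act G.
Hypothesis Htau : eve_forces G tau.
Variable D : nat.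
Hypothesis HD : forall cs, preE tau cs -> nonterm (rep (actE tau) (respE tau) cs) -> (size cs < D)%N.

Local Notation repE := (rep (actE tau) (respE tau)).
Local Notation MT := (option (D.-bseq {set St G})).

Definition nextE (m : MT) (o : {set St G}) : seq {set St G} :=
  match m with None => [::] | Some b => normE tau (rcons (val b) o) end.
Definition upE (m : MT) (o : {set St G}) : MT := Some (insub_bseq D (nextE m o)).
Definition outE (m : MT) (o : {set St G}) : Act G := tau (repE (nextE m o)).

Definition absn (e : ext) : nat := if e is EFin z then absz z else 0%N.
Definition gm (m : MT) (q : St G) : ext :=
  match m with None => EBot | Some b => lastf (repE (val b)) q end.
Definition Cb : nat := \sum_(m : MT) \sum_(q : St G) absn (gm m q).

Lemma eve_win : eve_fm_winning G.
Proof.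
exists MT, None, upE, outE.
move=> o a [Ho0 [HoO Hoa]] Hcons qq Hconc.
pose mem n := Defs.memE G MT None upE o n.
pose cs n := nextE (mem n) (o n).
pose S n := (\sum_(i < n) wt G (qq i) (a i) (qq i.+1))%R.
have Hmem : forall n, preE tau (cs n) -> nonterm (repE (cs n)) -> mem n.+1 = Some (insub_bseq D (cs n)).
  by [].
have Inv : forall n, preE tau (cs n) /\ nonterm (repE (cs n)) /\ supp G (lastf (repE (cs n))) = o n /\
   exists z, lastf (repE (cs n)) (qq n) = EFin z /\ (z <= S n)%R.
  elim => [|n [Hp [Hnt [Hs [z [Hz HzS]]]]]].
    have Hq0 : qq 0 = qI G by have := (Hconc 0).1; rewrite Ho0 inE => /eqP.
    have E0 : cs 0 = [::] by [].
    rewrite E0; split; first by move=> k.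
    split; first exact: ginit_nonterm.
    split.
      by apply/setP => q; rewrite Ho0 /supp /lastf /gf /= /fI !inE; case: eqP.
    exists 0%R; rewrite /S big_ord0 Hq0 /lastf /gf /= /fI eqxx; split => //.
  have Ecs : cs n.+1 = normE tau (rcons (cs n) (o n.+1)).
    rewrite /cs /= /upE /= val_insub_bseq //; exact: ltnW (HD Hp Hnt).
  have Han : a n = tau (repE (cs n)) by rewrite Hcons.
  have Hv : validE tau (repE (cs n)) (o n.+1).
    apply/andP; split; first exact: HoO.
    have /existsP [q /andP [Hq /existsP [q' /andP [Hq' Hd]]]] := Hoa n.
    apply/set0Pn; exists q'; rewrite in_setI Hq' in_post Hs /=.
    by apply/existsP; exists q; rewrite Hq -Han.
  have [Hp' [Hnt' [Hs' Hpr]]] := norm_step Hwf Htau Hp Hnt Hv.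
  rewrite Ecs; split => //; split => //; split => //.
  have Hq1 : qq n.+1 \in o n.+1 by case: (Hconc n.+1).
  have Hq0 : qq n \in supp G (lastf (repE (cs n))) by rewrite Hs; case: (Hconc n).
  have Hd : Delta G (qq n) (tau (repE (cs n))) (qq n.+1) by rewrite -Han; case: (Hconc n).
  have Hc : ccond (lastf (repE (cs n))) (tau (repE (cs n))) (qq n.+1) (qq n) by rewrite /ccond Hq0.
  have Hle := candl_le (mem_enum (St G) (qq n)) Hc.
  have Hl : lastf (stp (actE tau) (respE tau) (repE (cs n)) (o n.+1)) (qq n.+1) =
            mincand (lastf (repE (cs n))) (tau (repE (cs n))) (qq n.+1).
    by rewrite /stp lastf_gext /respE /minf Hq1.
  have Hq1' : qq n.+1 \in supp G (lastf (repE (normE tau (rcons (cs n) (o n.+1))))) by rewrite Hs'.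
  have H2 := Hpr.2 _ Hq1'.
  rewrite Hl in H2.
  have H3 := le_ext_trans H2 Hle.
  move: H3; rewrite /cval Hz /=.
  case: (lastf _ (qq n.+1)) => // z'' /= H3.
  exists z''; split => //.
  rewrite /S big_ord_recr /= -/(S n).
  rewrite addr0 in H3; apply: le_trans H3 _; by rewrite Han lerD2r.
move=> eps Heps.
have [N HN] := rat_eventually Cb eps Heps.
exists N => n Hn.
have [Hp [Hnt [_ [z [Hz HzS]]]]] := Inv n.
have Hm : gm (mem n.+1) (qq n) = EFin z.
  rewrite /mem /= /upE /= val_insub_bseq //; exact: ltnW (HD Hp Hnt).
have Hb : (absz z <= Cb)%N.
  have H : (absn (gm (mem n.+1) (qq n)) <= \sum_(q : St G) absn (gm (mem n.+1) q))%N.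
    exact: (sum_le_big _ (fun q => absn (gm (mem n.+1) q)) (qq n)).
  rewrite Hm /= in H; apply: leq_trans H _.
  exact: (sum_le_big _ (fun m => \sum_(q : St G) absn (gm m q)) (mem n.+1)).
have H1 := negabs _ _ Hb.
have H2 : (- (Cb%:Z) <= S n)%R by apply: le_trans H1 HzS.
apply: le_trans (_ : (- (Cb%:R) <= _)%R).
  by rewrite lerN2; apply: HN.
rewrite -(ler_int rat) intrN in H2.
exact: H2.
Qed.
End EveWin.


Section Adam.
Variable G : mpg.
Hypothesis Hwf : wf_mpg G.
Variable rho : gpos G -> Act G -> (St G -> ext).
Hypothesis Hrho : adam_forces G rho.

Definition actA (x : gpos G) (s : Act G) := s.
Definition respA (x : gpos G) (s : Act G) := rho x s.
Local Notation repA := (rep actA respA).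
Local Notation stepA := (stp actA respA).

Definition preA (cs : seq (Act G)) := forall k, (k < size cs)%N -> nonterm (repA (take k cs)).

Lemma preA_InPi cs : preA cs -> forall k, (k <= size cs)%N -> InPi G (repA (take k cs)).
Proof.
move=> Hp; elim => [|k IH] Hk; first by rewrite take0; exact: ginit_InPi.
have x0 : Act G by case: cs Hp IH Hk => // x0.
rewrite (take_nth x0 Hk) rep_rcons.
exact: Hrho.1 _ _ (IH (ltnW Hk)) (Hp k Hk).
Qed.

Lemma TA_of_term cs : preA cs -> ~ nonterm (repA cs) -> TA G (repA cs).
Proof.
move=> Hp Hnt.
pose xs k := repA (take k cs).
have H0 : xs 0 = ginit G by rewrite /xs take0.
have Hstep : forall k, nonterm (xs k) -> exists s, xs k.+1 = gextend G (xs k) s (rho (xs k) s).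
  move=> k Hk.
  case: (ltnP k (size cs)) => Hks; last by case: Hnt; rewrite -(take_oversize Hks).
  have x0 : Act G by move: Hks; case: (cs) => // x0.
  exists (nth x0 cs k).
  by rewrite /xs (take_nth x0 Hks) rep_rcons.
have [k [HTA Hj]] := Hrho.2 xs H0 Hstep.
case: (ltnP k (size cs)) => Hks.
  by case: (Hp k Hks) => _.
by move: HTA; rewrite /xs take_oversize.
Qed.

Lemma preA_rcons cs s : preA cs -> nonterm (repA cs) -> preA (rcons cs s).
Proof.
move=> Hp Hnt k; rewrite size_rcons ltnS leq_eqVlt => /orP [/eqP ->|Hk].
  by rewrite take_rcons_le // take_size.
by rewrite take_rcons_le ?(ltnW Hk) //; apply: Hp.
Qed.

Lemma preA_rcons_inv cs s : preA (rcons cs s) -> preA cs /\ nonterm (repA cs).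
Proof.
move=> Hp; split.
  move=> k Hk; have := Hp k; rewrite size_rcons ltnS (ltnW Hk) take_rcons_le ?(ltnW Hk) //.
  by apply.
by have := Hp (size cs); rewrite size_rcons ltnS leqnn take_rcons_le // take_size; apply.
Qed.

Lemma boundA : exists D, forall cs, preA cs -> nonterm (repA cs) -> (size cs < D)%N.
Proof.
suff Hno : ~ (exists c : nat -> Act G, forall n, preA (mkseq c n) /\ nonterm (repA (mkseq c n))).
  have [D HD] := @konig_bound _ (fun cs => preA cs /\ nonterm (repA cs))
    (fun p t H => preA_rcons_inv H.1) Hno.
  by exists D => cs H1 H2; apply: HD.
move=> [c Hc].
pose xs k := repA (mkseq c k).
have H0 : xs 0 = ginit G by [].
have Hstep : forall k, nonterm (xs k) -> exists s, xs k.+1 = gextend G (xs k) s (rho (xs k) s).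
  by move=> k Hk; exists (c k); rewrite /xs mkseqS rep_rcons.
have [k [HTA _]] := Hrho.2 xs H0 Hstep.
by case: (Hc k) => _ [].
Qed.

Definition TAidx (cs : seq (Act G)) (i : nat) :=
  (i < size cs)%N /\ preceq G 1%R (lastf (repA cs)) (gf G (repA cs) i) /\
  exists q, q \in supp G (gf G (repA cs) i) /\ gf G (repA cs) i q <> EInf.

Definition normA (cs : seq (Act G)) : seq (Act G) := take (pickn (TAidx cs) (size cs)) cs.

Lemma normA_step cs s : preA cs -> nonterm (repA cs) ->
  preA (normA (rcons cs s)) /\ nonterm (repA (normA (rcons cs s))) /\
  supp G (lastf (repA (normA (rcons cs s)))) = supp G (lastf (stepA (repA cs) s)) /\
  ((nonterm (stepA (repA cs) s) /\ normA (rcons cs s) = rcons cs s) \/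
   (~ nonterm (stepA (repA cs) s) /\
    preceq G 1%R (lastf (stepA (repA cs) s)) (lastf (repA (normA (rcons cs s)))) /\
    (exists q, q \in supp G (lastf (repA (normA (rcons cs s)))) /\
               lastf (repA (normA (rcons cs s))) q <> EInf) /\
    (size (normA (rcons cs s)) <= size cs)%N)).
Proof.
move=> Hp Hnt.
have Hr := @preA_rcons cs s Hp Hnt.
have Ey : repA (rcons cs s) = stepA (repA cs) s by rewrite rep_rcons.
have Piy : InPi G (repA (rcons cs s)).
  by have := preA_InPi Hr (leqnn _); rewrite take_size.
rewrite -Ey /normA.
case: (classic (nonterm (repA (rcons cs s)))) => Hy.
  rewrite pickn_none ?take_size; last first.
    move=> [i [Hi [Hpr Hq]]]; case: Hy => [_ nTA]; apply: nTA; split => //.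
    by exists i; split; [rewrite glen_rep | split].
  split; last split; last split; last by left.
  - exact: preA_rcons.
  - done.
  - done.
have [_ [i [Hi [Hpr Hq]]]] := TA_of_term Hr Hy.
rewrite glen_rep in Hi.
have [Hj [Hpr' Hq']] : TAidx (rcons cs s) (pickn (TAidx (rcons cs s)) (size (rcons cs s))).
  by apply: picknP; exists i.
move: Hj Hpr' Hq'; set j := pickn _ _ => Hj Hpr' Hq'.
rewrite -gf_rep_take ?(ltnW Hj) //.
split.
  move=> k; rewrite size_take Hj => Hk.
  by rewrite take_takel ?(ltnW Hk) //; apply: Hr; apply: ltn_trans Hj.
split; first exact: Hr.
split; first by rewrite Hpr'.1.
right; split => //; split => //; split => //.
by rewrite size_take Hj -ltnS -(size_rcons cs s).
Qed.
End Adam.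


Section AdamWin.
Variable G : mpg.
Hypothesis Hwf : wf_mpg G.
Variable rho : gpos G -> Act G -> (St G -> ext).
Hypothesis Hrho : adam_forces G rho.
Variable D : nat.
Hypothesis HD : forall cs, preA rho cs -> nonterm (rep (@actA G) (respA rho) cs) -> (size cs < D)%N.

Local Notation repA := (rep (@actA G) (respA rho)).
Local Notation stepA := (stp (@actA G) (respA rho)).
Local Notation MT := (D.-bseq (Act G)).

Definition m0A : MT := insub_bseq D [::].
Definition upA (m : MT) (o : {set St G}) (s : Act G) : MT := insub_bseq D (normA rho (rcons (val m) s)).
Definition dflt (o : {set St G}) (s : Act G) : {set St G} :=
  odflt set0 [pick o' in Obs G | o' :&: post G s o != set0].
Definition outA (m : MT) (o : {set St G}) (s : Act G) : {set St G} :=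
  let f := rho (repA (val m)) s in
  if (supp G f \in Obs G) && (supp G f :&: post G s o != set0) then supp G f else dflt o s.

Lemma dflt_ok o s : o \in Obs G -> dflt o s \in Obs G /\ dflt o s :&: post G s o != set0.
Proof.
move=> Ho; rewrite /dflt; case: pickP => [o' /andP [H1 H2] | Hn] //=.
have /set0Pn [q Hq] := obs_neq0 Hwf Ho.
have [_ [_ [Htot _]]] := Hwf.
have [q' Hd] := Htot q s.
have [o' [Ho' Hq']] := obs_cover Hwf q'.
have := Hn o'; rewrite Ho' /=; move/negbT; rewrite negbK => /eqP E.
have : q' \in o' :&: post G s o.
  rewrite in_setI Hq' in_post; apply/existsP; exists q; by rewrite Hq.
by rewrite E inE.
Qed.

Lemma outA_ok m o s : o \in Obs G -> outA m o s \in Obs G /\ outA m o s :&: post G s o != set0.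
Proof.
move=> Ho; rewrite /outA; case: ifP => [/andP [H1 H2] | _] //; exact: dflt_ok.
Qed.

Lemma size_normA l : (size (normA rho l) <= size l)%N.
Proof. rewrite /normA size_take; case: ifP => // /ltnW //. Qed.

Lemma outA_step (m : MT) o s : preA rho (val m) -> nonterm (repA (val m)) ->
  supp G (lastf (repA (val m))) = o -> outA m o s = supp G (lastf (stepA (repA (val m)) s)).
Proof.
move=> Hp Hnt Hs.
have HP : InPi G (repA (val m)) by have := preA_InPi Hrho Hp (leqnn _); rewrite take_size.
have := Hrho.1 _ s HP Hnt; case => _ [Hsc _].
move: Hsc; rewrite /gextend /= succ_chain_rcons -lastf_last => [[_ [H1 [H2 _]]]].
rewrite /stp lastf_gext /outA /respA /= H1 /=.
have /set0Pn [q Hq] := obs_neq0 Hwf H1.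
suff -> : supp G (rho (repA (val m)) s) :&: post G s o != set0 by [].
apply/set0Pn; exists q; rewrite in_setI Hq -Hs; exact: (subsetP H2).
Qed.

Lemma succ_step x s : InPi G x -> nonterm x -> successor G (lastf x) s (rho x s).
Proof.
move=> HP Hnt; have := Hrho.1 _ s HP Hnt; case => _ [Hsc _].
by move: Hsc; rewrite /gextend /= succ_chain_rcons -lastf_last => [[_ H]].
Qed.

Definition absnA (e : ext) : nat := if e is EFin z then absz z else 0%N.
Definition CbA : nat := \sum_(m : MT) \sum_(q : St G) absnA (lastf (repA (val m)) q).

Lemma adam_win : adam_fm_winning G.
Proof.
exists MT, m0A, upA, outA; split.
  move=> o a n [_ [HoO _]] _ s; apply: outA_ok; exact: HoO.
move=> o a [Ho0 [HoO Hoa]] Hcons Heve.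
pose mem n := memA G MT m0A upA o a n.
pose cs n := val (mem n).
have Inv : forall n, preA rho (cs n) /\ nonterm (repA (cs n)) /\ supp G (lastf (repA (cs n))) = o n.
  elim => [|n [Hp [Hnt Hs]]].
    have E0 : cs 0 = [::] by rewrite /cs /= /m0A val_insub_bseq.
    rewrite E0; split; first by move=> k.
    split; first exact: ginit_nonterm.
    by apply/setP => q; rewrite Ho0 /supp /lastf /gf /= /fI !inE; case: eqP.
  have [Hp' [Hnt' [Hs' _]]] := normA_step Hrho (a n) Hp Hnt.
  have Ecs : cs n.+1 = normA rho (rcons (cs n) (a n)).
    rewrite /cs /= /upA val_insub_bseq //; apply: leq_trans (size_normA _) _.
    by rewrite size_rcons; exact: HD Hp Hnt.
  rewrite Ecs; split => //; split => //.
  by rewrite Hs' Hcons; symmetry; apply: outA_step.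
have Ecs : forall n, cs n.+1 = normA rho (rcons (cs n) (a n)).
  move=> n; have [Hp [Hnt _]] := Inv n.
  rewrite /cs /= /upA val_insub_bseq //; apply: leq_trans (size_normA _) _.
  by rewrite size_rcons; exact: HD Hp Hnt.
pose y n := stepA (repA (cs n)) (a n).
pose rs k : nat := if excluded_middle_informative (nonterm (y k)) then 0%N else 1%N.
pose Rst n := (\sum_(k < n) rs k)%N.
have RstS : forall n, Rst n.+1 = (Rst n + rs n)%N by move=> n; rewrite /Rst big_ord_recr.
have Hcase : forall n,
  (nonterm (y n) /\ cs n.+1 = rcons (cs n) (a n) /\ rs n = 0%N) \/
  (~ nonterm (y n) /\ preceq G 1%R (lastf (y n)) (lastf (repA (cs n.+1))) /\
   (exists q, q \in supp G (lastf (repA (cs n.+1))) /\ lastf (repA (cs n.+1)) q <> EInf) /\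
   (size (cs n.+1) <= size (cs n))%N /\ rs n = 1%N).
  move=> n; have [Hp [Hnt _]] := Inv n.
  have [_ [_ [_ [[H1 H2]|[H1 [H2 [H3 H4]]]]]]] := normA_step Hrho (a n) Hp Hnt.
    by left; rewrite Ecs H2 /rs; case: excluded_middle_informative.
  right; rewrite Ecs; split => //; split => //; split => //; split => //.
  by rewrite /rs; case: excluded_middle_informative.
have Hgrow : forall n, (n <= size (cs n) + D * Rst n)%N.
  elim => [|n IH]; first by [].
  have [Hp [Hnt _]] := Inv n; have Hsz := HD Hp Hnt.
  rewrite RstS; case: (Hcase n) => [[_ [-> ->]]|[_ [_ [_ [Hs ->]]]]].
    rewrite size_rcons; lia.
  lia.
have Hreset : forall N, exists k, (N <= k)%N /\ rs k = 1%N.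
  move=> N; apply: NNPP => Hn.
  have Hsz : forall j, size (cs (N + j)) = (size (cs N) + j)%N.
    elim => [|j IH]; first by rewrite !addn0.
    rewrite addnS; case: (Hcase (N + j)) => [[_ [-> _]]|[_ [_ [_ [_ Hr]]]]].
      by rewrite size_rcons IH addnS.
    by case: Hn; exists (N + j)%N; rewrite leq_addr.
  have [Hp [Hnt _]] := Inv (N + D)%N.
  have := HD Hp Hnt; rewrite Hsz; lia.
pose vl n := lastf (repA (cs n)).
pose Sp (p : seq (St G)) k := (\sum_(i < k) wt G (nth (qI G) p i) (a i) (nth (qI G) p i.+1))%R.
pose P (p : seq (St G)) := forall k, (k < size p)%N ->
  nth (qI G) p k \in o k /\
  ((k.+1 < size p)%N -> Delta G (nth (qI G) p k) (a k) (nth (qI G) p k.+1)) /\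
  exists z, vl k (nth (qI G) p k) = EFin z /\ (Sp p k + (Rst k)%:Z <= z)%R.
have Sp_rcons : forall p t k, (k < size p)%N -> Sp (rcons p t) k = Sp p k.
  move=> p t k Hk; apply: eq_bigr => i _.
  have Hi : (i < size p)%N by apply: ltn_trans Hk.
  have Hi1 : (i.+1 < size p)%N by apply: leq_ltn_trans Hk.
  by rewrite !nth_rcons Hi Hi1.
have Pclosed : forall p t, P (rcons p t) -> P p.
  move=> p t Hp k Hk.
  have Hk' : (k < size (rcons p t))%N by rewrite size_rcons ltnS ltnW.
  have [H1 [H2 [z [H3 H4]]]] := Hp k Hk'.
  rewrite nth_rcons Hk in H1 H3; rewrite Sp_rcons // in H4.
  split => //; split; last by exists z.
  move=> Hk1; have := H2; rewrite size_rcons ltnS (ltnW Hk1) !nth_rcons Hk Hk1; by apply.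
have Hnode : forall n q z, vl n q = EFin z -> exists p, P p /\ size p = n.+1 /\ nth (qI G) p n = q.
  elim => [|n IH] q z Hz.
    have E0 : cs 0 = [::] by rewrite /cs /= /m0A val_insub_bseq.
    move: Hz; rewrite /vl E0 /lastf /gf /= /fI; case: eqP => // -> _.
    exists [:: qI G]; split => //; move=> k; rewrite ltnS leqn0 => /eqP -> /=.
    split; first by rewrite Ho0 inE.
    split => //; exists 0%R; rewrite /vl E0 /lastf /gf /= /fI eqxx; split => //.
    by rewrite /Sp /Rst !big_ord0.
  have [Hp [Hnt Hs]] := Inv n.
  have HP : InPi G (repA (cs n)) by have := preA_InPi Hrho Hp (leqnn _); rewrite take_size.
  have Hsucc : successor G (lastf (repA (cs n))) (a n) (rho (repA (cs n)) (a n)) by apply: succ_step.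
  have Hly : lastf (y n) = rho (repA (cs n)) (a n) by rewrite /y /stp lastf_gext.
  have [z' [Hz' Hle]] : exists z', lastf (y n) q = EFin z' /\ (z' + (Rst n.+1)%:Z <= z + (Rst n)%:Z)%R.
    rewrite RstS; case: (Hcase n) => [[_ [Ec ->]]|[_ [Hpr [_ [_ ->]]]]].
      exists z; split; last by rewrite addn0 lexx.
      by move: Hz; rewrite /vl Ec rep_rcons.
    have Hq : q \in supp G (lastf (y n)).
      by rewrite Hpr.1 /supp inE; move: Hz; rewrite /vl => ->.
    have := Hpr.2 q Hq; move: Hz; rewrite /vl => ->.
    case: (lastf (y n) q) => // z'' /= H; exists z''; split => //.
    rewrite PoszD; lia.
  have Hq : q \in supp G (rho (repA (cs n)) (a n)) by rewrite -Hly /supp inE Hz'.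
  have [_ [_ Hmin]] := Hsucc.
  case: (Hmin q Hq) => [[[q' [Hq' [Hd Ecv]]] _]|]; last by rewrite -Hly Hz'.
  rewrite -Hly Hz' in Ecv.
  have Hq'v := addwFin (esym Ecv).
  have [p' [Hp' [Hsz Hn]]] := IH q' _ Hq'v.
  exists (rcons p' q); split; last by rewrite size_rcons Hsz nth_rcons Hsz ltnn eqxx.
  move=> k; rewrite size_rcons Hsz ltnS leq_eqVlt => /orP [/eqP ->|Hk].
    rewrite nth_rcons Hsz ltnn eqxx; split.
      have [_ [_ Hs1]] := Inv n.+1; rewrite -Hs1 /supp inE; by move: Hz; rewrite /vl => ->.
    split; first by rewrite ?size_rcons ?Hsz ltnn.
    exists z; split => //.
    rewrite /Sp big_ord_recr /= -/(Sp _ n) Sp_rcons ?Hsz //.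
    rewrite !nth_rcons Hsz ltnS leqnn ltnn eqxx Hn.
    have Hn' : (n < size p')%N by rewrite Hsz.
    have [_ [_ [z0 [Hz0 Hle0]]]] := Hp' n Hn'.
    rewrite /vl Hn Hq'v in Hz0; case: Hz0 => Ez0; rewrite -Ez0 in Hle0.
    lia.
  rewrite nth_rcons Hsz Hk; have Hk' : (k < size p')%N by rewrite Hsz.
  have [H1 [H2 [z1 [H3 H4]]]] := Hp' k Hk'.
  split => //; split; last by exists z1; rewrite Sp_rcons.
  move=> _; rewrite nth_rcons Hsz; case: (ltnP k.+1 n.+1) => Hk2.
    by apply: H2; rewrite Hsz.
  have Ek : k = n by apply/eqP; rewrite eqn_leq -ltnS Hk /=.
  rewrite Ek eqxx.
by rewrite Hn.
have Hlong : forall N, exists p, P p /\ (N <= size p)%N.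
  move=> N; have [k [Hk Hr]] := Hreset N.
  case: (Hcase k) => [[_ [_ Hr0]]|[_ [_ [[q [Hq Hfin]] _]]]]; first by rewrite Hr0 in Hr.
  have [z Hz] : exists z, vl k.+1 q = EFin z.
    move: Hq Hfin; rewrite /vl /supp inE; case: (lastf _ q) => // z _ _; by exists z.
  have [p [Pp [Hs _]]] := Hnode _ _ _ Hz.
  by exists p; split => //; rewrite Hs; apply: leqW; apply: leqW.
have [c Hc] := konig Pclosed Hlong.
have Hconc : concretization G o a c.
  move=> i; have Hi : (i < size (mkseq c i.+2))%N by rewrite size_mkseq ltnW.
  have [H1 [H2 _]] := Hc i.+2 i Hi.
  have E1 : nth (qI G) (mkseq c i.+2) i = c i by rewrite nth_mkseq // ltnW.
  have E2 : nth (qI G) (mkseq c i.+2) i.+1 = c i.+1 by rewrite nth_mkseq.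
  rewrite E1 E2 in H1 H2; split => //; apply: H2; by rewrite size_mkseq.
have Hmp := Heve c Hconc.
have D0 : (0 < D)%N.
  have [Hp [Hnt _]] := Inv 0; exact: leq_ltn_trans (leq0n _) (HD Hp Hnt).
pose eps : rat := ((2*D)%:R)^-1.
have Heps : (0 < eps)%R by rewrite invr_gt0 ltr0n muln_gt0.
have [N HN] := Hmp eps Heps.
pose n := (N + (2 * D * (CbA + 1)).+1)%N.
have Hn : (N <= n)%N by rewrite leq_addr.
have H1 := HN n Hn.
have Hn1 : (n < size (mkseq c n.+1))%N by rewrite size_mkseq.
have [_ [_ [z [Hz Hle]]]] := Hc n.+1 n Hn1.
have ESp : Sp (mkseq c n.+1) n = (\sum_(i < n) wt G (c i) (a i) (c i.+1))%R.
  have E : forall j, (j <= n)%N -> nth (qI G) (mkseq c n.+1) j = c j by move=> j Hj; rewrite nth_mkseq.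
  apply: eq_bigr => i _; rewrite !E //; exact: ltnW.
rewrite ESp in Hle.
rewrite nth_mkseq // in Hz.
have Hb : (absz z <= CbA)%N.
  have H : (absnA (lastf (repA (val (mem n))) (c n)) <= \sum_(q : St G) absnA (lastf (repA (val (mem n))) q))%N.
    exact: (sum_le_big _ (fun q => absnA (lastf (repA (val (mem n))) q)) (c n)).
  move: Hz; rewrite /vl /cs => Hz.
  rewrite Hz /= in H; apply: leq_trans H _.
  exact: (sum_le_big _ (fun m : MT => \sum_(q : St G) absnA (lastf (repA (val m)) q)) (mem n)).
have HX : ((\sum_(i < n) wt G (c i) (a i) (c i.+1)) + (Rst n)%:Z <= CbA%:Z)%R.
  apply: le_trans Hle _; exact: posabs.
have H2 := rat_to_int _ _ _ _ D0 (erefl _) H1.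
have [Hp [Hnt _]] := Inv n.
have Hfin := final_contra _ _ _ _ _ _ D0 (HD Hp Hnt) (Hgrow n) HX H2.
move: Hfin; rewrite /n; lia.
Qed.
End AdamWin.


Unset Implicit Arguments.

Theorem theorem4 (G : mpg) :
  wf_mpg G -> forcibly_terminating G ->
  eve_fm_winning G \/ adam_fm_winning G.
Proof.
move=> Hwf [[tau Htau]|[rho Hrho]].
  left; have [D HD] := boundE Hwf Htau; exact: (@eve_win G Hwf tau Htau D HD).
right; have [D HD] := boundA Hrho; exact: (@adam_win G Hwf rho Hrho D HD).
Qed.
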